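(* For every hypothesis class $\mathcal{F}\subseteq\mathcal{Y}^{\mathcal{X}}$ (with $\mathcal{Y}$ finite), $\mathrm{DFFdim}(\mathrm{OtD}(\mathcal{F}))=\mathrm{Ldim}(\mathcal{F})$.
   Context: Setting. A teacher over $\mathcal{X},\mathcal{Y},\Phi$ ($\Phi$ a set of Boolean features on $\mathcal{X}$, $\bot$ a null symbol) is a pair $T=(\ell,\psi)$ with $\ell:\mathcal{X}\to\mathcal{Y}$ and $\psi:\mathcal{X}\times\mathcal{X}\to\Phi\cup\{\bot\}$ such that whenever $\ell(x)\neq\ell(\hat x)$, $\phi:=\psi(x,\hat x)\in\Phi$, $\phi(x)=1$ and $\phi(\hat x)=0$. A teacher class is a set of teachers. A history is a non-empty set $H\subseteq\mathcal{X}\times\mathcal{Y}$, $H_{\mathcal{X}}=\{x:\exists y,(x,y)\in H\}$; a teacher $(\ell,\psi)$ is consistent with $H$ if $\ell(x)=y$ for all $(x,y)\in H$; $\mathcal{T}_H$ is the set of teachers in $\mathcal{T}$ consistent with $H$. DFF dimension. A DFF tree is a rooted tree whose nodes are triples $\langle y,\phi,x\rangle$ with $y\in\mathcal{Y}\cup\{\bot\}$, $\phi\in\Phi\cup\{\bot\}$, $x\in\mathcal{X}\cup\{\bot\}$, such that the root has $y=\phi=\bot$, a node has $x=\bot$ iff it is a leaf, every edge is labeled by a pair $(\hat x,\hat y)\in\mathcal{X}\times\mathcal{Y}$, and every non-root node $\langle y,\phi,x\rangle$ with incoming edge $(\hat x,\hat y)$ has $\phi\neq\bot$ whenever $y\neq\hat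 y$. For a parent–child pair $\langle\cdot,\cdot,x\rangle\xrightarrow{(\hat x,\hat y)}\langle y,\phi,\cdot\rangle$ on a path, $(x,y)$ is called a labeled example in that path. A path from the root is consistent with a teacher $(\ell,\psi)$ if for every such parent–child pair on it, $\ell(x)=y$ and, if $y\neq\hat y$, $\psi(x,\hat x)=\phi$. Given $\mathcal{T}$ consistent with $H$, a DFF tree is shattered by $\mathcal{T}$ and $H$ if: (1) every non-root node $\langle y,\phi,x\rangle$ with incoming edge $(\hat x,\hat y)$ has $y\neq\hat y$; (2) the labels of the outgoing edges of each non-leaf node $v$ are exactly the pairs that belong to $H$ or are labeled examples in the path from the root to $v$; (3) every root-to-leaf path is consistent with some teacher in $\mathcal{T}_H$; (4) all root-to-leaf paths have the same number of edges, called the height. $\mathrm{DFFdim}(\mathcal{T},H)$ is the maximal height of a DFF tree shattered by $\mathcal{T}$ and $H$. $\mathrm{Ldim}$ is the (multiclass) Littlestone dimension: the maximal depth of a complete binary tree whose internal nodes are labeled by examples and whose two outgoing edges at each internal node are labeled by two distinct labels, such that for every root-to-leaf path some $f\in\mathcal{F}$ agrees with all (example, edge label) pairs on the path. Mapping OtD: given $\mathcal{F}\subseteq\mathcal{Y}^{\mathcal{X}}$, for each $y\in\mathcal{Y}$ let $\star_y\notin\mathcal{X}$ be a new distinct point, $H=\{(\star_y,y):y\in\mathcal{Y}\}$, $\mathcal{X}'=\mathcal{X}\cup H_{\mathcal{X}}$, and $\Phi=\{\mathbb{I}[x]:x\in\mathcal{X}'\}$ where $\mathbb{I}[x](x')=1$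 iff $x'=x$. For $f\in\mathcal{F}$ let $f':\mathcal{X}'\to\mathcal{Y}$ extend $f$ by $f'(\star_y)=y$, let $\psi_f(x,x')=\mathbb{I}[x]$, and $T_f=(f',\psi_f)$. Then $\mathrm{OtD}(\mathcal{F})=(\mathcal{T}_{\mathcal{F}},H)$ with $\mathcal{T}_{\mathcal{F}}=\{T_f:f\in\mathcal{F}\}$ (a teacher class over $\mathcal{X}',\mathcal{Y},\Phi$). *)

(* Defs.v *)
From mathcomp Require Import all_boot.
From Stdlib Require Import ClassicalEpsilon.
From Stdlib Require List.

Set Implicit Arguments.
Unset Strict Implicit.
Unset Printing Implicit Defensive.

(* Extended heights: XBot = maximum of the empty set, XInf = unbounded. *)
Inductive xnat := XBot | XFin of nat | XInf.

Definition sup_height (P : nat -> Prop) : xnat :=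
  match excluded_middle_informative (exists n, P n) with
  | right _ => XBot
  | left _ =>
    match excluded_middle_informative (exists b, forall n, P n -> n <= b) with
    | right _ => XInf
    | left _ => XFin (epsilon (inhabits 0%N)
                        (fun m => P m /\ forall n, P n -> n <= m))
    end
  end.

(* Teachers over X, Y, Phi.  Features are functions X -> bool; the    *)
(* feature set Phi is a predicate on them; None plays the role of bot. *)
Section Teachers.
Variables (X Y : Type).

Record teacher := Teacher {
  t_lab : X -> Y;
  t_psi : X -> X -> option (X -> bool) }.

Definition is_teacher (Phi : (X -> bool) -> Prop) (T : teacher) : Prop :=
  forall x xh, t_lab T x <> t_lab T xh ->
    exists phi, t_psi T x xh = Some phi /\ Phi phi /\ phi x = true /\ phi xh = false.

Record dff_setting := DFFSetting {
  s_Phi : (X -> bool) -> Prop;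
  s_class : teacher -> Prop;
  s_hist : X * Y -> Prop }.

Definition consistent (T : teacher) (H : X * Y -> Prop) : Prop :=
  forall x y, H (x, y) -> t_lab T x = y.

Definition class_H (C : teacher -> Prop) (H : X * Y -> Prop) : teacher -> Prop :=
  fun T => C T /\ consistent T H.

(* DFF trees: nodes <y, phi, x>, edges labelled by (xh, yh). *)
Inductive dtree :=
  DNode : option Y -> option (X -> bool) -> option X ->
          list ((X * Y) * dtree) -> dtree.

(* One parent-child pair on a path:
   parent <_,_,px> --(ex,ey)--> child <cy, cphi, _>. *)
Record step := Step {
  st_px : X; st_ex : X; st_ey : Y;
  st_cy : option Y; st_cphi : option (X -> bool) }.

Definition path_consistent (T : teacher) (p : seq step) : Prop :=
  forall s, List.In s p ->
    Some (t_lab T (st_px s)) = st_cy s /\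
    (st_cy s <> Some (st_ey s) -> t_psi T (st_px s) (st_ex s) = st_cphi s).

Definition in_examples (l : X * Y) (p : seq step) : Prop :=
  exists s, List.In s p /\ st_px s = l.1 /\ st_cy s = Some l.2.

(* dff_shat Phi H TH p n t : the subtree t, reached through the path p
   from the root, satisfies the DFF-tree axioms and the shattering
   conditions (1)-(3), and all its root-to-leaf paths have n edges (4). *)
Inductive dff_shat (Phi : (X -> bool) -> Prop) (H : X * Y -> Prop)
    (TH : teacher -> Prop) : seq step -> nat -> dtree -> Prop :=
| ds_leaf p y phi :
    (exists T, TH T /\ path_consistent T p) ->
    dff_shat Phi H TH p 0 (DNode y phi None [::])
| ds_node p n y phi x ch :
    ch <> [::] ->
    (forall l, (exists t, List.In (l, t) ch) <-> (H l \/ in_examples l p)) ->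
    (forall l t, List.In (l, t) ch ->
       exists y' phi' ox' ch',
         t = DNode y' phi' ox' ch' /\
         (forall f, phi' = Some f -> Phi f) /\
         (y' <> Some l.2 -> phi' <> None) /\
         y' <> Some l.2 /\
         dff_shat Phi H TH (rcons p (Step x l.1 l.2 y' phi')) n t) ->
    dff_shat Phi H TH p n.+1 (DNode y phi (Some x) ch).

Definition is_root (t : dtree) : Prop :=
  match t with DNode y phi _ _ => y = None /\ phi = None end.

Definition DFFdim (S : dff_setting) : xnat :=
  sup_height (fun n => exists t, is_root t /\
    dff_shat (s_Phi S) (s_hist S) (class_H (s_class S) (s_hist S)) [::] n t).

Inductive ltree :=
| LLeaf : ltree
| LNode : X -> Y -> Y -> ltree -> ltree -> ltree.

Inductive l_shat (F : (X -> Y) -> Prop) : seq (X * Y) -> nat -> ltree -> Prop :=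
| ls_leaf p :
    (exists f, F f /\ forall e, List.In e p -> f e.1 = e.2) ->
    l_shat F p 0 LLeaf
| ls_node p d x y0 y1 t0 t1 :
    y0 <> y1 ->
    l_shat F (rcons p (x, y0)) d t0 ->
    l_shat F (rcons p (x, y1)) d t1 ->
    l_shat F p d.+1 (LNode x y0 y1 t0 t1).

Definition Ldim (F : (X -> Y) -> Prop) : xnat :=
  sup_height (fun d => exists t, l_shat F [::] d t).

End Teachers.

(* The mapping OtD.  X' = X + Y, with star_y := inr y. *)
Section OtD.
Variables (X Y : Type).

Definition indic (x : X + Y) : X + Y -> bool :=
  fun x' => if excluded_middle_informative (x' = x) then true else false.

Definition otd_Phi : (X + Y -> bool) -> Prop := fun phi => exists x, phi = indic x.

Definition otd_hist : (X + Y) * Y -> Prop :=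
  fun p => match p.1 with inr y => p.2 = y | inl _ => False end.

Definition ext_lab (f : X -> Y) : X + Y -> Y :=
  fun z => match z with inl x => f x | inr y => y end.

Definition T_of (f : X -> Y) : teacher (X + Y) Y :=
  Teacher (ext_lab f) (fun x _ => Some (indic x)).

Definition otd_class (F : (X -> Y) -> Prop) : teacher (X + Y) Y -> Prop :=
  fun T => exists f, F f /\ T = T_of f.

Definition OtD (F : (X -> Y) -> Prop) : dff_setting (X + Y) Y :=
  DFFSetting otd_Phi (otd_class F) otd_hist.

End OtD.

(* Main.v *)
Require Import Defs.
From mathcomp Require Import all_boot.
From Stdlib Require Import FunctionalExtensionality PropExtensionality.

Set Implicit Arguments.
Unset Strict Implicit.
Unset Printing Implicit Defensive.

Lemma sup_height_ext (P Q : nat -> Prop) :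
  (forall n, P n <-> Q n) -> sup_height P = sup_height Q.
Proof.
move=> H; have -> : P = Q; last by [].
apply: functional_extensionality => n; apply: propositional_extensionality; exact: H.
Qed.

Lemma In_rcons (A : Type) (x s : A) p :
  List.In x (rcons p s) <-> List.In x p \/ x = s.
Proof.
elim: p => [|h p IH] /=; first by split; [case=> [->|[]]; right | case=> [[]|->]; left].
rewrite IH; tauto.
Qed.

Lemma In_map (A B : Type) (f : A -> B) x s :
  List.In x (map f s) <-> exists y, List.In y s /\ x = f y.
Proof.
elim: s => [|h s IH] /=; first by split=> [[]|[y [[] _]]].
rewrite IH; split.
- case=> [<-|[y [Hy ->]]]; [by exists h; split; [left|] | by exists y; split; [right|]].
- by case=> y [[<-|Hy] ->]; [left | right; exists y].
Qed.

Lemma In_mem (T : eqType) (x : T) s : List.In x s <-> x \in s.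
Proof.
elim: s => [|h s IH] //=; rewrite in_cons IH; split.
- by case=> [->|->]; rewrite ?eqxx ?orbT.
- by case/orP=> [/eqP->|]; [left|right].
Qed.

Section Main.
Variables (X : Type) (Y : finType) (F : (X -> Y) -> Prop).

Notation Z := (X + Y)%type.
Notation DS := (dff_shat (@otd_Phi X Y) (@otd_hist X Y)
                  (class_H (otd_class F) (@otd_hist X Y))).

Fixpoint lp (p : seq (step Z Y)) : seq (X * Y) :=
  match p with
  | [::] => [::]
  | s :: r => match st_px s, st_cy s with
              | inl a, Some z => (a, z) :: lp r
              | _, _ => lp r end
  end.

Lemma lp_rcons p s a z : st_px s = inl a -> st_cy s = Some z ->
  lp (rcons p s) = rcons (lp p) (a, z).
Proof.
move=> Hpx Hcy; elim: p => [|h p IH] /=; first by rewrite Hpx Hcy.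
by rewrite IH; case: (st_px h) => ?; case: (st_cy h).
Qed.

Lemma lp_in e p : List.In e (lp p) ->
  exists s, List.In s p /\ st_px s = inl e.1 /\ st_cy s = Some e.2.
Proof.
elim: p => [|h p IH] //=.
case E1: (st_px h) => [a|w]; case E2: (st_cy h) => [z|] /=;
  try by move=> /IH [s [? ?]]; exists s; split; [right|].
case=> [<-|/IH [s [? ?]]]; last by exists s; split; [right|].
by exists h; split; [left|].
Qed.

Lemma pc_rcons (T : teacher Z Y) p s : path_consistent T (rcons p s) ->
  path_consistent T p.
Proof. by move=> H s' Hs'; apply: H; apply/In_rcons; left. Qed.

Lemma leaf_exists n p t : DS p n t ->
  exists T, class_H (otd_class F) (@otd_hist X Y) T /\ path_consistent T p.
Proof.
elim: n p t => [|n IH] p t Hs; inversion Hs as [p0 y phi Hex|p0 n0 y phi x ch Hne Hlab Hch]; subst => //.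
clear Hs; case: ch Hne Hlab Hch => [//|[l t'] ch] _ _ Hch.
have [y' [phi' [ox' [ch' [_ [_ [_ [_ Hs']]]]]]]] := Hch l t' (or_introl erefl).
have [T [HT Hpc]] := IH _ _ Hs'.
exists T; split => //; exact: pc_rcons Hpc.
Qed.


Lemma forward n p t : DS p n t -> exists lt, l_shat F (lp p) n lt.
Proof.
elim: n p t => [|n IH] p t Hs.
  inversion Hs as [p0 y phi Hex|]; subst.
  case: Hex => T [[[f [Ff ->]] _] Hpc].
  exists (LLeaf X Y); constructor; exists f; split => // e /lp_in [s [Hs' [Hpx Hcy]]].
  have [H1 _] := Hpc s Hs'.
  by move: H1; rewrite Hpx Hcy /= => -[].
inversion Hs as [|p0 n0 y phi x ch Hne Hlab Hch]; subst; clear Hs.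
have Hchild : forall w : Y, exists t' y' phi',
    y' <> Some w /\ DS (rcons p (Step x (inr w) w y' phi')) n t'.
  move=> w; have [t' Ht'] : exists t', List.In ((inr w, w), t') ch.
    by apply/Hlab; left.
  have [y' [phi' [ox' [ch' [_ [_ [_ [Hy Hs']]]]]]]] := Hch _ _ Ht'.
  by exists t', y', phi'.
have Hlab_of : forall w y' phi' t', DS (rcons p (Step x (inr w) w y' phi')) n t' ->
    exists f, y' = Some (ext_lab f x).
  move=> w y' phi' t' /leaf_exists [T [[[f [_ ->]] _] Hpc]].
  exists f; have [H1 _] := Hpc (Step x (inr w) w y' phi') (proj2 (In_rcons _ _ _) (or_intror erefl)).
  by rewrite /= in H1; rewrite -H1.
case: x Hchild Hlab_of Hch => [a|w] Hchild Hlab_of Hch; last first.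
  have [t' [y' [phi' [Hy Hs']]]] := Hchild w.
  by have [f Ef] := Hlab_of _ _ _ _ Hs'.
case: ch Hne Hlab Hch => [//|[l0 t00] ch] _ Hlab Hch.
set y0 := l0.2.
have [t0 [y'0 [phi'0 [Hy0 Hs0]]]] := Hchild y0.
have [f0 Ef0] := Hlab_of _ _ _ _ Hs0; subst y'0; simpl in Hy0.
set z0 := f0 a.
have [t1 [y'1 [phi'1 [Hy1 Hs1]]]] := Hchild z0.
have [f1 Ef1] := Hlab_of _ _ _ _ Hs1; subst y'1; simpl in Hy1.
have [lt0 H0] := IH _ _ Hs0.
have [lt1 H1] := IH _ _ Hs1.
exists (LNode a z0 (f1 a) lt0 lt1); constructor.
- by move=> E; apply: Hy1; rewrite E.
- by move: H0; rewrite (@lp_rcons _ _ a z0).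
- by move: H1; rewrite (@lp_rcons _ _ a (f1 a)).
Qed.


Fixpoint exs (p : seq (step Z Y)) : seq (Z * Y) :=
  match p with
  | [::] => [::]
  | s :: r => match st_cy s with
              | Some z => (st_px s, z) :: exs r
              | None => exs r end
  end.

Definition labels p := map (fun y : Y => ((inr y : Z), y)) (enum Y) ++ exs p.

Lemma exs_spec l p : List.In l (exs p) <-> in_examples l p.
Proof.
elim: p => [|h p IH] /=; first by split=> [[]|[s [[] _]]].
case E: (st_cy h) => [z|]; split.
- case=> [<-|/IH [s [? ?]]]; last by exists s; split; [right|].
  by exists h; split; [left|].
- case=> s [[<-|Hs] [H1 H2]]; first by left; move: H2; rewrite E H1 => -[->]; by case: l {H1 IH}.
  by right; apply/IH; exists s.
- by move/IH=> [s [? ?]]; exists s; split; [right|].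
- case=> s [[<-|Hs] [H1 H2]]; first by rewrite E in H2.
  by apply/IH; exists s.
Qed.

Lemma labels_spec l p : List.In l (labels p) <-> otd_hist l \/ in_examples l p.
Proof.
rewrite /labels List.in_app_iff exs_spec In_map; split.
- case=> [[y [_ ->]]|]; [by left | by right].
- case=> [|]; last by right.
  case: l => [[x|w] y] //; rewrite /otd_hist /= => ->; left; exists w; split => //; apply/(@In_mem Y); by rewrite mem_enum.
Qed.

Fixpoint conv (t : ltree X Y) (p : seq (step Z Y)) (y : option Y)
    (phi : option (Z -> bool)) : dtree Z Y :=
  match t with
  | LLeaf => DNode y phi None [::]
  | LNode a y0 y1 t0 t1 =>
    DNode y phi (Some (inl a)) (map (fun l : Z * Y =>
      (l, if l.2 == y0 then
            conv t1 (rcons p (Step (inl a) l.1 l.2 (Some y1) (Some (indic (inl a)))))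
                 (Some y1) (Some (indic (inl a)))
          else
            conv t0 (rcons p (Step (inl a) l.1 l.2 (Some y0) (Some (indic (inl a)))))
                 (Some y0) (Some (indic (inl a))))) (labels p))
  end.

Lemma conv_node t p y phi : exists ox ch, conv t p y phi = DNode y phi ox ch.
Proof. by case: t => [|? ? ? ? ?] /=; eexists; eexists. Qed.

Definition Rel (p : seq (step Z Y)) (q : seq (X * Y)) :=
  forall s, List.In s p -> exists a z, st_px s = inl a /\ st_cy s = Some z /\
    List.In (a, z) q /\ st_cphi s = Some (indic (inl a)).

Lemma Rel_rcons p q a z l : Rel p q ->
  Rel (rcons p (Step (inl a) l.1 l.2 (Some z) (Some (indic (inl a))))) (rcons q (a, z)).
Proof.
move=> HR s /In_rcons [Hs|->].
  have [a' [z' [? [? [? ?]]]]] := HR s Hs.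
  by exists a', z'; do 3 split => //; apply/In_rcons; left.
by exists a, z; do 3 split => //; apply/In_rcons; right.
Qed.

Lemma child_ok p q d a (l : Z * Y) tj yj : Rel p q -> yj <> l.2 ->
  (forall p, Rel p (rcons q (a, yj)) -> forall y phi, DS p d (conv tj p y phi)) ->
  let P := rcons p (Step (inl a) l.1 l.2 (Some yj) (Some (indic (inl a)))) in
  exists y' phi' ox' ch',
    conv tj P (Some yj) (Some (indic (inl a))) = DNode y' phi' ox' ch' /\
    (forall f, phi' = Some f -> otd_Phi f) /\
    (y' <> Some l.2 -> phi' <> None) /\
    y' <> Some l.2 /\
    DS (rcons p (Step (inl a) l.1 l.2 y' phi')) d
       (conv tj P (Some yj) (Some (indic (inl a)))).
Proof.
move=> HR Hyj IHj P.
have [ox [ch E]] := conv_node tj P (Some yj) (Some (indic (inl a))).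
exists (Some yj), (Some (indic (inl a))), ox, ch; split; first exact: E.
split; first by move=> f [<-]; exists (inl a).
split; first by [].
split; first by case.
by apply: IHj; apply: Rel_rcons.
Qed.

Lemma backward q d t : l_shat F q d t ->
  forall p, Rel p q -> forall y phi, DS p d (conv t p y phi).
Proof.
elim=> {q d t} [q [f [Ff Hf]]|q d a y0 y1 t0 t1 Hne _ IH0 _ IH1] p HR y phi /=.
  constructor; exists (T_of f); split.
    split; first by exists f.
    by move=> [x|w] yy //= ->.
  move=> s Hs; have [a [z [Hpx [Hcy [Hin Hphi]]]]] := HR s Hs.
  rewrite Hpx Hcy Hphi /=; split; last by [].
  by rewrite (Hf _ Hin).
constructor.
- move=> E; have : List.In ((inr y0 : Z), y0) (labels p) by apply/labels_spec; left.
  by case: (labels p) E.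
- move=> l; rewrite -labels_spec; split.
  + by case=> t /In_map [l' [Hl' [-> _]]].
  + by move=> Hl; eexists; apply/In_map; exists l; split.
- move=> l t /In_map [l' [Hl' [<- ->]]].
  case E: (l.2 == y0).
  + apply: (child_ok HR _ IH1); rewrite (eqP E) => H; exact: Hne (esym H).
  + apply: (child_ok HR _ IH0) => H; by rewrite H eqxx in E.
Qed.

End Main.

Theorem mainTheorem8 (X : Type) (Y : finType) (F : (X -> Y) -> Prop) :
  DFFdim (OtD F) = Ldim F.
Proof.
rewrite /DFFdim /Ldim; apply: sup_height_ext => n /=; split.
- case=> t [_ Ht]; have [lt Hlt] := forward Ht; by exists lt.
- case=> lt Hlt; exists (conv lt [::] None None); split.
    by case: lt Hlt.
  by apply: (backward Hlt) => s [].
Qed.
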